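(* Let $\mathscr Q_n$ be a non-singular quadric in $\mathrm{PG}(n,2)$ of projective index $g\ge1$, let $0\le s<g$, let $\alpha_s$ be an $s$-dimensional subspace contained in $\mathscr Q_n$, and let $\Gamma_s$ be the graph constructed from $\alpha_s$ as described below. If $\mathcal C$ is a clique of $\Gamma_s$ with exactly $2^{g+1}-1$ vertices, then $\mathcal C$ is a $g$-clique of Class A or of Class B.
   Context: A non-singular quadric $\mathscr Q_n$ in $\mathrm{PG}(n,2)$ is the point set of a non-degenerate quadric; its projective index $g$ is the largest dimension of a projective subspace contained in $\mathscr Q_n$, and the $g$-dimensional subspaces contained in $\mathscr Q_n$ are its generators. The point-graph $\Gamma$ has vertex set the points of $\mathscr Q_n$, two distinct points adjacent iff the line joining them is contained in $\mathscr Q_n$. A point $X$ of $\mathscr Q_n$ has type (i) if $X\in\alpha_s$; type (ii) if $X\notin\alpha_s$ and $\langle\alpha_s,X\rangle\subseteq\mathscr Q_n$; type (iii) otherwise. Let $\mathcal X_s$ be the type (ii) points and $\mathcal Y_s$ the points of type (i) or (iii). The graph $\Gamma_s$ has the same vertex set as $\Gamma$ and the same edges, except that for each vertex $R\in\mathcal Y_s$ having exactly $\frac12|\mathcal X_s|$ neighbours in $\mathcal X_s$ (in $\Gamma$), those edges are deleted and $R$ is joined instead to the other $\frac12|\mathcal X_s|$ vertices of $\mathcal X_s$. A $g$-clique of Class A is the point set of a generator of $\mathscr Q_n$ containing $\alpha_s$. A $g$-clique of Class B is a set $(\alpha_s\cap\Pi)\cup(\Sigma\setminus(\alpha_s\cup\Pi))\cup(\Pi\setminus\Sigma)$,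 where $\Sigma,\Pi$ are generators of $\mathscr Q_n$ with $\alpha_s\subseteq\Sigma$, $\alpha_s\not\subseteq\Pi$, and $\Sigma\cap\Pi$ of dimension $g-1$. *)

(* Defs.v *)
From HB Require Import structures.
From mathcomp Require Import all_boot all_order all_algebra.
Set Implicit Arguments. Unset Strict Implicit. Unset Printing Implicit Defensive.
Import GRing.Theory.
Local Open Scope ring_scope.

(* PG(n,2): the points are the nonzero vectors of F_2^(n+1)
   (over F_2 each 1-dim subspace has exactly one nonzero vector).
   Projective subspaces of dimension d are vector subspaces of dimension d+1. *)
Definition vec (n : nat) := 'rV['F_2]_(n.+1).

Definition qf (n : nat) (A : 'M['F_2]_(n.+1)) (x : vec n) : 'F_2 :=
  (x *m A *m x^T) 0 0.

Definition polar (n : nat) (A : 'M['F_2]_(n.+1)) (x y : vec n) : 'F_2 :=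
  qf A (x + y) - qf A x - qf A y.

Definition nonsingular (n : nat) (A : 'M['F_2]_(n.+1)) : Prop :=
  forall x : vec n, x != 0 -> qf A x = 0 -> exists y : vec n, polar A x y != 0.

Definition qpoints (n : nat) (A : 'M['F_2]_(n.+1)) : {set vec n} :=
  [set x : vec n | (x != 0) && (qf A x == 0)].

Definition ppoints (n : nat) (U : {vspace vec n}) : {set vec n} :=
  [set x : vec n | (x != 0) && (x \in U)].

Definition in_quadric (n : nat) (A : 'M['F_2]_(n.+1)) (U : {vspace vec n}) : bool :=
  [forall x : vec n, (x \in U) ==> (qf A x == 0)].

Definition proj_index (n : nat) (A : 'M['F_2]_(n.+1)) (g : nat) : Prop :=
  (exists U : {vspace vec n}, in_quadric A U /\ \dim U = g.+1) /\
  (forall U : {vspace vec n}, in_quadric A U -> \dim U <= g.+1)%N.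

Definition generator (n : nat) (A : 'M['F_2]_(n.+1)) (g : nat) (U : {vspace vec n}) : Prop :=
  in_quadric A U /\ \dim U = g.+1.

Definition adjG (n : nat) (A : 'M['F_2]_(n.+1)) (P R : vec n) : bool :=
  [&& P \in qpoints A, R \in qpoints A, P != R & in_quadric A (<[P]> + <[R]>)%VS].

Definition typeII (n : nat) (A : 'M['F_2]_(n.+1)) (al : {vspace vec n}) : {set vec n} :=
  [set X in qpoints A | (X \notin al) &&
     in_quadric A (al + <[X]>)%VS].

Definition typeY (n : nat) (A : 'M['F_2]_(n.+1)) (al : {vspace vec n}) : {set vec n} :=
  qpoints A :\: typeII A al.

Definition special (n : nat) (A : 'M['F_2]_(n.+1)) (al : {vspace vec n}) (R : vec n) : bool :=
  (R \in typeY A al) &&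
  (#|[set X in typeII A al | adjG A R X]| * 2 == #|typeII A al|)%N.

Definition adjGs (n : nat) (A : 'M['F_2]_(n.+1)) (al : {vspace vec n}) (P R : vec n) : bool :=
  if special A al R && (P \in typeII A al) then
    [&& P \in qpoints A, R \in qpoints A, P != R & ~~ adjG A P R]
  else if special A al P && (R \in typeII A al) then
    [&& P \in qpoints A, R \in qpoints A, P != R & ~~ adjG A P R]
  else adjG A P R.

Definition clique_s (n : nat) (A : 'M['F_2]_(n.+1)) (al : {vspace vec n}) (C : {set vec n}) : Prop :=
  C \subset qpoints A /\
  (forall P R : vec n, P \in C -> R \in C -> P != R -> adjGs A al P R).

Definition classA (n : nat) (A : 'M['F_2]_(n.+1)) (g : nat) (al : {vspace vec n})
  (C : {set vec n}) : Prop :=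
  exists S : {vspace vec n}, [/\ generator A g S, (al <= S)%VS & C = ppoints S].

Definition classB (n : nat) (A : 'M['F_2]_(n.+1)) (g : nat) (al : {vspace vec n})
  (C : {set vec n}) : Prop :=
  exists S Pi : {vspace vec n},
    [/\ generator A g S /\ generator A g Pi, (al <= S)%VS, ~~ (al <= Pi)%VS,
        \dim (S :&: Pi)%VS = g &
        C = ppoints (al :&: Pi)%VS
            :|: (ppoints S :\: (ppoints al :|: ppoints Pi))
            :|: (ppoints Pi :\: ppoints S)].

(* Main.v *)
Require Import Defs.
From mathcomp Require Import all_boot all_order all_algebra finfield ring zify.
Set Implicit Arguments. Unset Strict Implicit. Unset Printing Implicit Defensive.
Import GRing.Theory.
Local Open Scope ring_scope.

Lemma F2_cases (c : 'F_2) : c = 0 \/ c = 1.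
Proof. 
have := ltn_ord c.
case E: (nat_of_ord c) => [|[|m]] // _; [left|right]; exact: val_inj.
Qed.
Lemma F2_add_self (c : 'F_2) : c + c = 0.
Proof. case: (F2_cases c) => ->; [by rewrite addr0 | apply: val_inj; reflexivity]. Qed.
Lemma F2_neq0 (c : 'F_2) : c != 0 -> c = 1.
Proof. by case: (F2_cases c) => ->. Qed.
Lemma F2_1neq0 : (1 : 'F_2) != 0. Proof. reflexivity. Qed.
Lemma card_F2 : #|'F_2| = 2%N.
Proof. by rewrite card_Fp. Qed.

Section Q.
Variables (n : nat) (A : 'M['F_2]_(n.+1)).
Local Notation qf := (qf A).
Local Notation polar := (polar A).

Lemma card_vs (U : {vspace vec n}) : #|U| = (2 ^ \dim U)%N.
Proof. by rewrite card_vspace card_F2. Qed.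

Lemma mxD00 (M N : 'M['F_2]_1) : (M + N) 0 0 = M 0 0 + N 0 0.
Proof. by rewrite mxE. Qed.
Lemma mxZ00 c (M : 'M['F_2]_1) : (c *: M) 0 0 = c * M 0 0.
Proof. by rewrite mxE. Qed.

Lemma polarE x y : polar x y = (x *m A *m y^T) 0 0 + (y *m A *m x^T) 0 0.
Proof.
rewrite /Defs.polar /Defs.qf linearD /= !mulmxDl !mulmxDr !mxD00. ring.
Qed.

Lemma qfD x y : qf (x + y) = qf x + qf y + polar x y.
Proof. rewrite /Defs.polar; ring. Qed.

Lemma polarC x y : polar x y = polar y x.
Proof. by rewrite !polarE addrC. Qed.

Lemma polarDr x y z : polar x (y + z) = polar x y + polar x z.
Proof. rewrite !polarE linearD /= mulmxDr !mulmxDl !mxD00; ring. Qed.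

Lemma polarZr x c y : polar x (c *: y) = c * polar x y.
Proof. rewrite !polarE linearZ /= -scalemxAr -!scalemxAl !mxZ00; ring. Qed.

Lemma polarDl x y z : polar (y + z) x = polar y x + polar z x.
Proof. by rewrite !(polarC _ x) polarDr. Qed.

Lemma polarZl x c y : polar (c *: y) x = c * polar y x.
Proof. by rewrite !(polarC _ x) polarZr. Qed.

Lemma polar0r x : polar x 0 = 0.
Proof. by rewrite -(scale0r 0) polarZr mul0r. Qed.
Lemma polar0l x : polar 0 x = 0.
Proof. by rewrite polarC polar0r. Qed.

Lemma polarxx x : polar x x = 0.
Proof. by rewrite polarE F2_add_self. Qed.

Lemma qf0 : qf 0 = 0.
Proof. by rewrite /Defs.qf !mul0mx mxE. Qed.

Lemma qfZ c x : qf (c *: x) = c * qf x.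
Proof. by case: (F2_cases c) => ->; rewrite ?scale0r ?scale1r ?mul0r ?mul1r ?qf0. Qed.

Lemma oppF2 (c : 'F_2) : - c = c.
Proof. by apply: (addrI c); rewrite subrr F2_add_self. Qed.
Lemma oppv (x : vec n) : - x = x.
Proof. by apply/rowP => i; rewrite mxE oppF2. Qed.
Lemma addvv (x : vec n) : x + x = 0.
Proof. by rewrite -{1}(oppv x) addNr. Qed.

Lemma in_quadricP (U : {vspace vec n}) :
  reflect (forall x, x \in U -> qf x = 0) (in_quadric A U).
Proof.
apply: (iffP forallP) => [H x xU | H x]; first by move/implyP/(_ xU)/eqP: (H x).
by apply/implyP => /H ->.
Qed.

Lemma quadric_qf U x : in_quadric A U -> x \in U -> qf x = 0.
Proof. by move/in_quadricP; apply. Qed.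

Definition iso (U : {vspace vec n}) := forall x y, x \in U -> y \in U -> polar x y = 0.

Lemma quadric_iso U : in_quadric A U -> iso U.
Proof.
move/in_quadricP=> H x y xU yU.
have := qfD x y; rewrite !H ?rpredD // !add0r => /esym. done.
Qed.

Lemma quadric_add (U V : {vspace vec n}) : in_quadric A U -> in_quadric A V ->
  (forall u v, u \in U -> v \in V -> polar u v = 0) -> in_quadric A (U + V)%VS.
Proof.
move=> /in_quadricP HU /in_quadricP HV Hp; apply/in_quadricP => z /memv_addP [u uU [v vV ->]].
by rewrite qfD HU // HV // Hp // !addr0.
Qed.

Lemma quadric_line x : qf x = 0 -> in_quadric A <[x]>%VS.
Proof. by move=> H; apply/in_quadricP => z /vlineP [k ->]; rewrite qfZ H mulr0. Qed.

Lemma quadric_sub (U V : {vspace vec n}) : (U <= V)%VS -> in_quadric A V -> in_quadric A U.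
Proof. by move=> /subvP sUV /in_quadricP H; apply/in_quadricP => x /sUV /H. Qed.

Lemma perp_span (X : seq (vec n)) v : (forall y, y \in X -> polar v y = 0) ->
  forall z, z \in <<X>>%VS -> polar v z = 0.
Proof.
elim: X => [|x X IH] H z; first by rewrite span_nil memv0 => /eqP ->; rewrite polar0r.
rewrite span_cons => /memv_addP [u /vlineP [k ->] [w Hw ->]].
rewrite polarDr polarZr H ?mem_head // mulr0 add0r IH // => y yX.
by apply: H; rewrite in_cons yX orbT.
Qed.

Lemma span_quadric (X : seq (vec n)) : (forall x, x \in X -> qf x = 0) ->
  (forall x y, x \in X -> y \in X -> polar x y = 0) -> in_quadric A <<X>>%VS.
Proof.
elim: X => [|x X IH] Hq Hp.
  by apply/in_quadricP => z; rewrite span_nil memv0 => /eqP ->; rewrite qf0.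
rewrite span_cons; apply: quadric_add.
- by apply: quadric_line; apply: Hq; rewrite mem_head.
- apply: IH => [y yX|y z yX zX]; first by apply: Hq; rewrite in_cons yX orbT.
  by apply: Hp; rewrite in_cons ?yX ?zX orbT.
- move=> u v /vlineP [k ->] vX; rewrite polarZl.
  rewrite (@perp_span X x) ?mulr0 // => y yX.
  by apply: Hp; rewrite in_cons ?yX ?eqxx ?orbT.
Qed.

Definition sv (U : {vspace vec n}) : {set vec n} := [set x | x \in U].

Lemma card_sv (U : {vspace vec n}) : #|sv U| = (2 ^ \dim U)%N.
Proof. by rewrite -card_vs; apply: eq_card => x; rewrite inE. Qed.

Lemma card_ppoints (U : {vspace vec n}) : #|ppoints U| = (2 ^ \dim U - 1)%N.
Proof.
rewrite -card_vs (cardD1 0 U) mem0v add1n subSS subn0.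
by apply: eq_card => x; rewrite !inE.
Qed.

Lemma polarE2 x y : polar x y = (y *m (A + A^T) *m x^T) 0 0.
Proof.
rewrite polarE mulmxDr mulmxDl mxD00 addrC; congr (_ + _).
by rewrite -[LHS]trace_mx11 -mxtrace_tr !trmx_mul trmxK mulmxA trace_mx11.
Qed.

Definition basmx (E : {vspace vec n}) : 'M['F_2]_(\dim E, n.+1) :=
  \matrix_(i < \dim E) (vbasis E)`_i.

Definition perpmx (E : {vspace vec n}) := (A + A^T) *m (basmx E)^T.

Definition perpS (E : {vspace vec n}) : {vspace vec n} :=
  lker (linfun (mulmxr (perpmx E))).

Lemma perpS_mem E x : x \in perpS E -> forall e, e \in E -> polar e x = 0.
Proof.
rewrite memv_ker lfunE /= => /eqP H0 e eE.
rewrite (coord_vbasis eE); elim/big_ind: _ => [|u v Hu Hv|i _].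
- by rewrite polar0l.
- by rewrite polarDl Hu Hv addr0.
rewrite polarZl; apply/eqP; rewrite mulf_eq0; apply/orP; right; apply/eqP.
have H1 : (x *m perpmx E) 0 i = 0 by rewrite H0 mxE.
rewrite polarE2 -H1 /perpmx mulmxA !mxE; apply: eq_bigr => j _; rewrite !mxE.
congr (_ * _); by rewrite /basmx mxE.
Qed.

Lemma perpS_dim E U : (\dim U <= \dim (U :&: perpS E) + \dim E)%N.
Proof.
rewrite -{1}(limg_ker_dim (linfun (mulmxr (perpmx E))) U) leq_add2l.
apply: leq_trans (dimvS (subvf _)) _.
by rewrite dimvf /dim /= mul1n.
Qed.

Lemma qpointsE x : (x \in qpoints A) = (x != 0) && (qf x == 0).
Proof. by rewrite inE. Qed.

Lemma adjGE P R : P \in qpoints A -> R \in qpoints A ->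
  adjG A P R = (P != R) && (polar P R == 0).
Proof.
move=> HP HR; rewrite /adjG HP HR /=; congr (_ && _).
move: HP HR; rewrite !qpointsE => /andP [_ /eqP qP] /andP [_ /eqP qR].
apply/idP/eqP => [/in_quadricP H | H].
  have := H (P + R) (memv_add (memv_line P) (memv_line R)).
  by rewrite qfD qP qR !add0r.
apply: quadric_add; rewrite ?quadric_line //.
by move=> u v /vlineP [k ->] /vlineP [l ->]; rewrite polarZl polarZr H !mulr0.
Qed.

Variable al : {vspace vec n}.

Definition perpal x := [forall a, (a \in al) ==> (polar a x == 0)].

Lemma perpalP x : reflect (forall a, a \in al -> polar a x = 0) (perpal x).
Proof.
apply: (iffP forallP) => [H a aal | H a]; first by move/implyP/(_ aal)/eqP: (H a).
by apply/implyP => /H ->.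
Qed.

Lemma nperpalP x : ~~ perpal x -> exists2 a, a \in al & polar a x = 1.
Proof.
rewrite /perpal negb_forall => /existsP [a].
by rewrite negb_imply => /andP [aal Ha]; exists a => //; apply: F2_neq0.
Qed.

Opaque perpal.

Lemma perpal_al (Hal : in_quadric A al) x : x \in al -> perpal x.
Proof. by move=> xal; apply/perpalP => a aal; apply: (quadric_iso Hal aal xal). Qed.

Lemma typeIIE (Hal : in_quadric A al) X :
  (X \in typeII A al) = [&& X \in qpoints A, X \notin al & perpal X].
Proof.
rewrite /typeII inE; case HX: (X \in qpoints A) => //=; congr (_ && _).
move: HX; rewrite qpointsE => /andP [_ /eqP qX].
apply/idP/perpalP => [/in_quadricP H a aal | H].
  have := H (a + X) (memv_add aal (memv_line X)).
  by rewrite qfD qX (quadric_qf Hal aal) !add0r.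
apply: quadric_add; rewrite ?quadric_line //.
by move=> u v uU /vlineP [l ->]; rewrite polarZr H ?mulr0.
Qed.

Lemma half_card (U : {vspace vec n}) v w : w \in U -> polar v w = 1 ->
  #|sv U :&: [set x | polar v x == 0]| = #|sv U :\: [set x | polar v x == 0]|.
Proof.
move=> wU Hvw.
have Hinj : injective (fun x : vec n => x + w) by apply: addIr.
have K1 : forall x, x \in U -> (x + w \in U) by move=> x xU; rewrite rpredD.
have K2 : forall x, polar v (x + w) = polar v x + 1 by move=> x; rewrite polarDr Hvw.
apply/eqP; rewrite eqn_leq; apply/andP; split.
  rewrite -(card_imset _ Hinj); apply: subset_leq_card; apply/subsetP => y.
  move=> /imsetP [x]; rewrite !inE => /andP [xU /eqP Hx] ->.
  by rewrite K1 // K2 Hx add0r F2_1neq0.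
rewrite -(card_imset _ Hinj); apply: subset_leq_card; apply/subsetP => y.
move=> /imsetP [x]; rewrite !inE => /andP [Hx xU] ->.
by rewrite K1 // K2 (F2_neq0 Hx) F2_add_self eqxx.
Qed.

Lemma special_iii (Hal : in_quadric A al) R : R \in qpoints A -> ~~ perpal R ->
  special A al R.
Proof.
move=> HR NP.
have [a aal Ha] := nperpalP NP.
have RnT : R \notin typeII A al.
  by rewrite typeIIE //; apply/negP => /and3P [_ _ H]; rewrite H in NP.
rewrite /special /typeY inE RnT HR /=.
set T := typeII A al.
have E1 : [set X in T | adjG A R X] = T :&: [set x | polar R x == 0].
  rewrite setIdE; apply/setP => X; rewrite !in_setI; case XT: (X \in T) => //=.
  rewrite !inE adjGE //; last by move: XT; rewrite typeIIE // => /andP [].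
  suff -> : R != X by [].
  by apply/eqP => RX; move: RnT; rewrite RX XT.
rewrite E1.
have E2 : forall B : {set vec n}, #|T :&: B| = #|T :\: B| ->
    (#|T :&: B| * 2 == #|T|)%N.
  by move=> B HB; rewrite -(cardsID B T) -HB muln2 addnn.
apply: E2.
have Hinj : injective (fun x : vec n => x + a) by apply: addIr.
have KT : forall x, x \in T -> x + a \in T.
  move=> x xT; move: (xT); rewrite /T (typeIIE Hal x) => /and3P [].
  rewrite (qpointsE x) => /andP [_ /eqP qx] xal /perpalP px.
  rewrite (typeIIE Hal (x + a)) (qpointsE (x + a)).
  have xa_al : x + a \notin al.
    by apply: contra xal => H; rewrite -(addrK a x) rpredB.
  apply/and3P; split => //.
  - rewrite qfD qx (quadric_qf Hal aal) polarC px // !addr0 eqxx andbT.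
    by apply/eqP => H; move: xa_al; rewrite H mem0v.
  - by apply/perpalP => b bal; rewrite polarDr px // (quadric_iso Hal bal aal) addr0.
have K2 : forall x, polar R (x + a) = polar R x + 1.
  by move=> x; rewrite polarDr (polarC R a) Ha.
apply/eqP; rewrite eqn_leq; apply/andP; split.
  rewrite -(card_imset _ Hinj); apply: subset_leq_card; apply/subsetP => y.
  move=> /imsetP [x]; rewrite in_setI => /andP [xT]; rewrite inE => /eqP Hx ->.
  by rewrite in_setD KT // andbT inE K2 Hx add0r F2_1neq0.
rewrite -(card_imset _ Hinj); apply: subset_leq_card; apply/subsetP => y.
move=> /imsetP [x]; rewrite in_setD => /andP [Hx xT] ->.
by rewrite in_setI KT // inE K2; move: Hx; rewrite inE => Hx; rewrite (F2_neq0 Hx) F2_add_self eqxx.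
Qed.

Lemma typeII_perp (Hal : in_quadric A al) X : X \in typeII A al -> perpal X.
Proof. by rewrite typeIIE // => /and3P []. Qed.

Lemma typeII_q (Hal : in_quadric A al) X : X \in typeII A al -> X \in qpoints A.
Proof. by rewrite typeIIE // => /and3P []. Qed.

Lemma special_perp (Hal : in_quadric A al) R P : special A al R ->
  P \in typeII A al -> ~~ perpal R.
Proof.
move=> /andP [RY /eqP Hc] PT; apply/negP => pR.
move: RY; rewrite /typeY in_setD => /andP [RnT HR].
have Ral : R \in al.
  by apply/negPn/negP => Rnal; move: RnT; rewrite typeIIE // HR Rnal pR.
have E : [set X in typeII A al | adjG A R X] = typeII A al.
  apply/setP => X; rewrite inE; case XT: (X \in typeII A al) => //=.
  rewrite adjGE // ?(typeII_q Hal XT) //.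
  move: XT; rewrite typeIIE // => /and3P [_ Xnal /perpalP pX].
  rewrite pX // eqxx andbT; by apply: contraNneq Xnal => <-.
rewrite E in Hc.
have : (0 < #|typeII A al|)%N by apply/card_gt0P; exists P.
move: Hc; lia.
Qed.

Lemma adjGsE (Hal : in_quadric A al) P R : P \in qpoints A -> R \in qpoints A ->
  P != R ->
  adjGs A al P R = if ((P \in typeII A al) && ~~ perpal R) ||
                      ((R \in typeII A al) && ~~ perpal P)
                   then polar P R != 0 else polar P R == 0.
Proof.
move=> HP HR PR; rewrite /adjGs.
case SR: (special A al R && (P \in typeII A al)).
  case/andP: SR => sR PT; rewrite ifT; last first.
    by apply/orP; left; apply/andP; split; [exact: PT | exact: (special_perp Hal sR PT)].
  by rewrite HP HR PR adjGE // PR.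
case SP: (special A al P && (R \in typeII A al)).
  case/andP: SP => sP RT; rewrite ifT; last first.
    by apply/orP; right; apply/andP; split; [exact: RT | exact: (special_perp Hal sP RT)].
  by rewrite HP HR PR adjGE // PR.
have -> : ((P \in typeII A al) && ~~ perpal R) = false.
  apply/negP => /andP [PT nR]; move: SR.
  by rewrite (special_iii Hal HR nR) PT.
have -> : ((R \in typeII A al) && ~~ perpal P) = false.
  apply/negP => /andP [RT nP]; move: SP.
  by rewrite (special_iii Hal HP nP) RT.
by rewrite adjGE // PR.
Qed.
End Q.


Section Main.
Variables (n : nat) (A : 'M['F_2]_(n.+1)) (al : {vspace vec n}).

Lemma clique_pair (Hal : in_quadric A al) C : clique_s A al C ->
  forall P R, P \in C -> R \in C ->
  polar A P R = (if ((P \in typeII A al) && ~~ perpal A al R) ||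
                   ((R \in typeII A al) && ~~ perpal A al P) then 1 else 0).
Proof.
move=> [Cq Hc] P R PC RC.
have HP : P \in qpoints A by apply: (subsetP Cq).
have HR : R \in qpoints A by apply: (subsetP Cq).
have [<-|PR] := eqVneq P R.
  rewrite polarxx; case: (P \in typeII A al) / idP => [PT|] //=.
  by rewrite (typeII_perp Hal PT).
have := Hc P R PC RC PR; rewrite adjGsE //.
by case: ifP => _ H; [apply: F2_neq0 | apply/eqP].
Qed.

Lemma fill_gen g (Hpi : proj_index A g) (U : {vspace vec n}) (C : {set vec n}) :
  in_quadric A U -> C \subset ppoints U -> #|C| = (2 ^ g.+1 - 1)%N ->
  C = ppoints U /\ \dim U = g.+1.
Proof.
move=> HU sCU HC.
have dU := Hpi.2 U HU.
have e1 := card_ppoints U.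
have l1 : (2 ^ \dim U <= 2 ^ g.+1)%N by rewrite leq_exp2l.
have p1 := expn_gt0 2 (\dim U).
have p2 := expn_gt0 2 g.+1.
have hC : C = ppoints U.
  by apply/eqP; rewrite eqEcard sCU e1 HC; lia.
split => //.
have : (2 ^ g.+1 <= 2 ^ \dim U)%N.
  have := subset_leq_card sCU; rewrite e1 HC; lia.
rewrite leq_exp2l // => H; apply/eqP; rewrite eqn_leq dU H.
done.
Qed.

End Main.

Lemma arith5 (c1 c2 c3 A1 A2 S1 S2 P1 P2 eS eP G : nat) :
  A1 = A2 -> S1 = S2 -> P1 = P2 -> (S1 + S2 = eS)%N -> (eS <= 2 * G)%N ->
  (P1 + P2 = eP)%N -> (eP <= 2 * G)%N -> (1 <= A1)%N -> (A2 <= S2)%N ->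
  (c1 <= A1 - 1)%N -> (c2 <= S2 - A2)%N -> (c3 <= P2)%N ->
  (c1 + c2 + c3 = 2 * G - 1)%N ->
  [/\ eS = (2 * G)%N, eP = (2 * G)%N, c1 = (A1 - 1)%N, c2 = (S2 - A2)%N & c3 = P2].
Proof. move=> h1 h2 h3 h4 h5 h6 h7 h8 h9 h10 h11 h12 h13; subst; split; lia. Qed.

Lemma half_eq (a b x G : nat) : a = b -> (a + b)%N = x -> x = (2 * G)%N -> b = G.
Proof. move=> *; lia. Qed.

Opaque perpal.
Section Pair.
Variables (n : nat) (A : 'M['F_2]_(n.+1)) (al : {vspace vec n}) (C : {set vec n}).
Hypothesis (Hal : in_quadric A al) (Hcl : clique_s A al C).

Lemma pair1 P R : P \in C -> R \in C -> P \in typeII A al -> ~~ perpal A al R ->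
  polar A P R = 1.
Proof.
move=> PC RC PT nR; rewrite (clique_pair Hal Hcl PC RC).
case: ifP => // /negP H; exfalso; apply: H.
by apply/orP; left; apply/andP; split.
Qed.

Lemma pair0 P R : P \in C -> R \in C ->
  (P \in typeII A al -> perpal A al R) -> (R \in typeII A al -> perpal A al P) ->
  polar A P R = 0.
Proof.
move=> PC RC h1 h2; rewrite (clique_pair Hal Hcl PC RC).
case: ifP => // /orP [] /andP [T1 T2].
  by exfalso; move/negP: T2; apply; exact: h1 T1.
by exfalso; move/negP: T2; apply; exact: h2 T1.
Qed.
End Pair.

Lemma arithB (g s a b c d : nat) : (s < g)%N -> (d <= a + b)%N -> (c + b)%N = s.+1 -> (a <= c)%N -> d = g.+1 -> False.
Proof. move=> *; lia. Qed.

Section Key.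
Variables (n : nat) (A : 'M['F_2]_(n.+1)).

Lemma in_sv (U : {vspace vec n}) x : (x \in sv U) = (x \in U).
Proof. by rewrite inE. Qed.

Lemma key_lemma (Sg al : {vspace vec n}) (R0 X0 r : vec n) (g s : nat) :
  (al <= Sg)%VS -> \dim al = s.+1 -> (s < g)%N -> \dim Sg = g.+1 ->
  X0 \in Sg -> polar A r X0 = 1 ->
  #|sv Sg :&: [set y | polar A R0 y == 0]| = (2 ^ g)%N ->
  (forall y, y \in Sg -> polar A R0 y != 0 -> y \notin al -> polar A r y = 1) ->
  (exists2 a, a \in al & polar A a r = 1) ->
  forall x, x \in Sg -> polar A R0 x = 0 -> polar A r x = 0.
Proof.
move=> alS dal sg dSg X0S rX0 hH C2P [ar aral Har] x xS xR.
pose K := sv Sg :&: [set y | polar A r y == 0].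
pose H := sv Sg :&: [set y | polar A R0 y == 0].
have mKP : forall y, reflect (y \in Sg /\ polar A r y = 0) (y \in K).
  move=> y; rewrite in_setI in_sv in_set.
  by apply: (iffP andP) => [] [h1 /eqP h2].
have mHP : forall y, reflect (y \in Sg /\ polar A R0 y = 0) (y \in H).
  move=> y; rewrite in_setI in_sv in_set.
  by apply: (iffP andP) => [] [h1 /eqP h2].
have hK : #|K| = #|sv Sg :\: [set y | polar A r y == 0]| := half_card X0S rX0.
have cK := cardsID [set y | polar A r y == 0] (sv Sg).
have hgK : #|K| = (2 ^ g)%N.
  rewrite hK; apply: (half_eq hK cK); rewrite card_sv dSg expnS; done.
have clK : forall y, y \in K -> y \notin H -> y \in al.
  move=> y /mKP [yS yr] yH.
  have yR : polar A R0 y != 0.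
    by apply/eqP => yR; move/negP: yH; apply; apply/mHP.
  apply/negPn/negP => ynal.
  by move: yr; rewrite (C2P y yS yR ynal).
have [kk kkK kkal] : exists2 k, k \in K & k \notin al.
  case: (boolP [exists k in K, k \notin al]) => [/existsP [k /andP [kK kal]]|NK].
    by exists k.
  exfalso.
  have sK : K \subset sv al.
    apply/subsetP => y yK; rewrite in_sv; apply/negPn/negP => ynal.
    by move/negP: NK; apply; apply/existsP; exists y; apply/andP; split.
  have eK : K = sv al.
    apply/eqP; rewrite eqEcard sK /= card_sv dal.
    apply: (@leq_trans (2 ^ g)); last by rewrite hgK.
    by rewrite leq_exp2l.
  have : ar \in K by rewrite eK in_sv.
  move/mKP => [_]; rewrite polarC Har; apply/eqP; exact: F2_1neq0.
have kkH : kk \in H by apply: contraR kkal; apply: clK.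
have sKH : K \subset H.
  apply/subsetP => y yK; apply: contraT => yH; exfalso.
  have yal := clK y yK yH.
  move/mKP: (yK) => [yS yr]; move/mKP: (kkK) => [kkS kkr]; move/mHP: (kkH) => [_ kkR].
  have ykK : y + kk \in K.
    by apply/mKP; split; [rewrite rpredD | rewrite polarDr yr kkr addr0].
  have [ykH | ykH] := boolP (y + kk \in H).
    move/mHP: ykH => [_]; rewrite polarDr kkR addr0 => yR.
    by move/negP: yH; apply; apply/mHP.
  have := clK _ ykK ykH => ykal.
  by move/negP: kkal; apply; rewrite -(addKr y kk) rpredD // rpredN.
have eKH : K = H.
  apply/eqP; rewrite eqEcard sKH /=; apply: eq_leq; exact: (etrans hH (esym hgK)).
have xH : x \in H by apply/mHP; split; [exact: xS | exact: xR].
have xK : x \in K := eq_ind_r (fun S : {set vec n} => x \in S) xH eKH.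
by move/mKP: xK => [].
Qed.
End Key.

Section Final.
Variables (n : nat) (A : 'M['F_2]_(n.+1)).

Lemma final_set (al Sg Pi : {vspace vec n}) (R0 X0 : vec n) :
  (al <= Sg)%VS ->
  (forall x, x \in Sg -> (x \in Pi) = (polar A R0 x == 0)) ->
  (forall x, x \in Pi -> (x \in Sg) = (polar A X0 x == 0)) ->
  ((sv al :&: [set y | polar A R0 y == 0]) :\ 0) :|:
  ((sv Sg :\: [set y | polar A R0 y == 0]) :\: sv al) :|:
  (sv Pi :\: [set y | polar A X0 y == 0]) =
  ppoints (al :&: Pi) :|: (ppoints Sg :\: (ppoints al :|: ppoints Pi)) :|:
  (ppoints Pi :\: ppoints Sg).
Proof.
move=> alS eH eP; apply/setP => x; rewrite !inE.
have [->|x0] := eqVneq x 0; first by rewrite !polar0r !eqxx /= !andbF.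
rewrite /= memv_cap.
case xS: (x \in Sg).
  rewrite (eH x xS); case xR: (polar A R0 x == 0).
    have xP : x \in Pi by rewrite eH.
    by rewrite -(eP x xP) xS; case: (x \in al); rewrite /= ?andbF ?andbT ?orbF.
  by case: (x \in al); rewrite /= ?andbF ?andbT ?orbF.
have xal : (x \in al) = false.
  by apply/negbTE; apply: contraFN xS => /(subvP alS).
rewrite xal /= !andbF /=; case xP: (x \in Pi); rewrite ?andbF ?andbT //=.
by rewrite -(eP x xP) xS.
Qed.
End Final.

Lemma setDUK' (T : finType) (A B : {set T}) : B \subset A -> A = (A :\: B) :|: B.
Proof.
move=> sBA; apply/setP => x; rewrite !inE.
case: (boolP (x \in B)) => [xB|_]; first by rewrite (subsetP sBA x xB) orbT.
by rewrite orbF.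
Qed.


Theorem lemma5p4 (n : nat) (A : 'M['F_2]_(n.+1)) (g s : nat)
  (al : {vspace vec n}) (C : {set vec n}) :
  nonsingular A -> proj_index A g -> (1 <= g)%N -> (s < g)%N ->
  in_quadric A al -> \dim al = s.+1 ->
  clique_s A al C -> #|C| = (2 ^ g.+1 - 1)%N ->
  classA A g al C \/ classB A g al C.
Proof.
move=> _ Hpi g1 sg Hal dal Hcl HC.
have Cq : C \subset qpoints A := Hcl.1.
have Hpair := clique_pair Hal Hcl.
have qC : forall x, x \in C -> qf A x = 0.
  by move=> x /(subsetP Cq); rewrite qpointsE => /andP [_ /eqP].
have nzC : forall x, x \in C -> x != 0.
  by move=> x /(subsetP Cq); rewrite qpointsE => /andP [].
case: (boolP [exists x in C, ~~ perpal A al x]) => [/existsP [R0 /andP [R0C nR0]] | NE].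
  have nR0T : R0 \notin typeII A al.
    by apply: contra nR0 => /(typeII_perp Hal).
  case: (boolP [exists x in C, x \in typeII A al]) => [/existsP [X0 /andP [X0C X0T]] | NT].
    have pX0 : perpal A al X0 := typeII_perp Hal X0T.
    have XR : polar A X0 R0 = 1 := pair1 Hal Hcl X0C R0C X0T nR0.
    have [a0 a0al Ha0] := nperpalP nR0.
    set C2 := C :&: typeII A al.
    set C3 := [set x in C | ~~ perpal A al x].
    set C1 := C :\: (C2 :|: C3).
    have mC2 : forall x, (x \in C2) = (x \in C) && (x \in typeII A al).
      by move=> x; rewrite in_setI.
    have mC3 : forall x, (x \in C3) = (x \in C) && ~~ perpal A al x.
      by move=> x; rewrite inE.
    set Sg := (al + <<enum C2>>)%VS.
    set Cn2 := C :\: C2.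
    have mCn2 : forall x, (x \in Cn2) = (x \notin C2) && (x \in C).
      by move=> x; rewrite in_setD.
    set Pi := <<enum Cn2>>%VS.
    have QS : in_quadric A Sg.
      apply: quadric_add => //.
        apply: span_quadric => [x|x y]; rewrite ?mem_enum.
          by rewrite mC2 => /andP [xC _]; apply: qC.
        rewrite !mC2 => /andP [xC xT] /andP [yC yT].
        by apply: (pair0 Hal Hcl xC yC) => _; apply: typeII_perp.
      move=> u v ual; apply: perp_span => y; rewrite mem_enum mC2 => /andP [_ yT].
      by move/perpalP: (typeII_perp Hal yT); apply.
    have QP : in_quadric A Pi.
      apply: span_quadric => [x|x y]; rewrite ?mem_enum.
        by rewrite mCn2 => /andP [_ xC]; apply: qC.
      rewrite !mCn2 !mC2 => /andP [xn xC] /andP [yn yC].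
      rewrite xC yC /= in xn yn.
      apply: (pair0 Hal Hcl xC yC) => HT.
        by exfalso; move/negP: xn; apply.
      by exfalso; move/negP: yn; apply.
    have dS := Hpi.2 Sg QS.
    have dP := Hpi.2 Pi QP.
    have isoS := quadric_iso QS.
    have isoP := quadric_iso QP.
    have alS : (al <= Sg)%VS by apply: addvSl.
    have X0S : X0 \in Sg.
      apply: (subvP (addvSr _ _)); apply: memv_span; rewrite mem_enum mC2 X0C X0T.
      done.
    have R0P : R0 \in Pi.
      by apply: memv_span; rewrite mem_enum mCn2 mC2 R0C (negbTE nR0T).
    set peR0 := [set x | polar A R0 x == 0].
    set peX0 := [set x | polar A X0 x == 0].
    have hS : #|sv Sg :&: peR0| = #|sv Sg :\: peR0| := half_card X0S (v := R0) (etrans (polarC A R0 X0) XR).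
    have hP : #|sv Pi :&: peX0| = #|sv Pi :\: peX0| := half_card R0P (v := X0) XR.
    have ha : #|sv al :&: peR0| = #|sv al :\: peR0| := half_card a0al (v := R0) (etrans (polarC A R0 a0) Ha0).
    have cS := cardsID peR0 (sv Sg).
    have cP := cardsID peX0 (sv Pi).
    have eSc := card_sv Sg.
    have ePc := card_sv Pi.
    set C1eq := (sv al :&: peR0) :\ 0.
    set C2eq := (sv Sg :\: peR0) :\: sv al.
    set C3eq := sv Pi :\: peX0.
    have I1 : C1 \subset C1eq.
      apply/subsetP => x; rewrite in_setD in_setU mC2 mC3 negb_or => /andP [/andP [h2 h3] xC].
      rewrite xC /= in h2 h3; rewrite negbK in h3.
      have xal : x \in al.
        apply/negPn/negP => xnal; move: h2; rewrite typeIIE // xnal h3.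
        by rewrite (subsetP Cq x xC).
      rewrite !inE nzC // xal /=.
      apply/eqP; apply: (pair0 Hal Hcl R0C xC) => HT.
        by exfalso; move/negP: nR0T; apply.
      by exfalso; move/negP: h2; apply.
    have I2 : C2 \subset C2eq.
      apply/subsetP => x; rewrite mC2 => /andP [xC xT].
      rewrite !inE.
      have -> : x \in Sg.
        by apply: (subvP (addvSr _ _)); apply: memv_span; rewrite mem_enum mC2 xC xT.
      rewrite polarC (pair1 Hal Hcl xC R0C xT nR0) /= andbT.
      by move: xT; rewrite typeIIE // => /and3P [].
    have I3 : C3 \subset C3eq.
      apply/subsetP => x; rewrite mC3 => /andP [xC nx].
      have xT : x \notin typeII A al by apply: contra nx => /(typeII_perp Hal).
      rewrite !inE.
      have -> : x \in Pi by apply: memv_span; rewrite mem_enum mCn2 mC2 xC (negbTE xT).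
      by rewrite (pair1 Hal Hcl X0C xC X0T nx).
    have k1 : #|C1eq| = (#|sv al :&: peR0| - 1)%N.
      rewrite (cardsD1 0 (sv al :&: peR0)).
      have -> : 0 \in sv al :&: peR0 by rewrite !inE mem0v polar0r eqxx.
      by rewrite add1n subSS subn0.
    have k2 : #|C2eq| = (#|sv Sg :\: peR0| - #|sv al :\: peR0|)%N.
      rewrite /C2eq [LHS]cardsD; congr (_ - _)%N; apply: eq_card => x; rewrite !inE.
      case xal: (x \in al); last by rewrite !andbF.
      by rewrite !andbT (subvP alS x xal) andbT.
    have k3 : (#|sv al :\: peR0| <= #|sv Sg :\: peR0|)%N.
      apply: subset_leq_card; apply/subsetP => x; rewrite !inE => /andP [-> xal].
      by rewrite (subvP alS x xal).
    have k4 : (1 <= #|sv al :&: peR0|)%N.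
      by apply/card_gt0P; exists 0; rewrite !inE mem0v polar0r eqxx.
    have sU : C2 :|: C3 \subset C.
      by rewrite subUset subsetIl /C3 setIdE subsetIl.
    have kC : #|C| = (#|C1| + #|C2| + #|C3|)%N.
      have d23 : C2 :&: C3 = set0.
        apply/setP => x; rewrite in_setI mC2 mC3 in_set0.
        case xT: (x \in typeII A al); first by rewrite (typeII_perp Hal xT) !andbF.
        by rewrite !andbF.
      rewrite -(cardsID (C2 :|: C3) C) (setIidPr sU) cardsU d23 cards0 subn0.
      by rewrite addnC addnA.
    have ldS : (2 ^ \dim Sg <= 2 * 2 ^ g)%N by rewrite -expnS leq_exp2l.
    have ldP : (2 ^ \dim Pi <= 2 * 2 ^ g)%N by rewrite -expnS leq_exp2l.
    have HC' : #|C| = (2 * 2 ^ g - 1)%N by rewrite HC expnS.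
    have [eS eP e1 e2 e3] := arith5 ha hS hP (etrans cS eSc) ldS (etrans cP ePc) ldP
      k4 k3 (leq_trans (subset_leq_card I1) (eq_leq k1))
      (leq_trans (subset_leq_card I2) (eq_leq k2))
      (subset_leq_card I3) (etrans (esym kC) HC').
    have dSg : \dim Sg = g.+1.
      by apply/eqP; rewrite -(eqn_exp2l _ _ (ltnSn 1)) eS expnS.
    have dPi : \dim Pi = g.+1.
      by apply/eqP; rewrite -(eqn_exp2l _ _ (ltnSn 1)) eP expnS.
    have hgS : #|sv Sg :\: peR0| = (2 ^ g)%N := half_eq hS cS (etrans eSc eS).
    have hgS' : #|sv Sg :&: peR0| = (2 ^ g)%N by rewrite hS.
    have hgP : #|sv Pi :&: peX0| = (2 ^ g)%N by rewrite hP; exact: half_eq hP cP (etrans ePc eP).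
    have eC1 : C1 = C1eq by apply/eqP; rewrite eqEcard I1 k1 e1 leqnn.
    have eC2 : C2 = C2eq by apply/eqP; rewrite eqEcard I2 k2 e2 leqnn.
    have eC3 : C3 = C3eq by apply/eqP; rewrite eqEcard I3 e3 leqnn.
    have key4 : forall r x, r \in C3 -> x \in Sg -> polar A R0 x = 0 -> polar A r x = 0.
      move=> r x rC3 xS xR.
      have /andP [rC nr] : (r \in C) && ~~ perpal A al r by rewrite -mC3.
      have rX0 : polar A r X0 = 1.
        by rewrite (polarC A r X0); exact: (pair1 Hal Hcl X0C rC X0T nr).
      apply: (key_lemma alS dal sg dSg X0S rX0 hgS' _ (nperpalP nr) xS xR).
      move=> y yS yR ynal.
      have yC2 : y \in C2.
        rewrite eC2 in_setD in_sv; apply/andP; split; first exact: ynal.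
        rewrite in_setD in_sv in_set; apply/andP; split; [exact: yR | exact: yS].
      have /andP [yC yT] : (y \in C) && (y \in typeII A al) by rewrite -mC2.
      by rewrite (polarC A r y); exact: (pair1 Hal Hcl yC rC yT nr).
    have HinP : forall x, x \in Sg -> polar A R0 x = 0 -> x \in Pi.
      move=> x xS xR.
      have ox : forall y, y \in enum Cn2 -> polar A x y = 0.
        move=> y; rewrite mem_enum => yCn2.
        have /andP [ynC2 yC] : (y \notin C2) && (y \in C) by rewrite -mCn2.
        case: (boolP (perpal A al y)) => py.
          have yal : y \in al.
            apply/negPn/negP => ynal.
            have yT : y \in typeII A al.
              rewrite typeIIE //; apply/and3P; split; [exact: (subsetP Cq y yC) | exact: ynal | exact: py].
            move/negP: ynC2; apply; rewrite mC2; apply/andP; split; [exact: yC | exact: yT].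
          exact: isoS _ _ xS (subvP alS y yal).
        have yC3 : y \in C3 by rewrite mC3; apply/andP; split; [exact: yC | exact: py].
        by rewrite (polarC A x y); exact: key4 yC3 xS xR.
      have xP : forall z, z \in Pi -> polar A x z = 0 := perp_span ox.
      have Q' : in_quadric A (Pi + <[x]>)%VS.
        apply: quadric_add => //; first exact: quadric_line (quadric_qf QS xS).
        move=> u v uP /vlineP [k ->]; rewrite polarZr (polarC A u x) (xP u uP) mulr0.
        done.
      have d' := Hpi.2 _ Q'.
      have : (\dim (Pi + <[x]>) <= \dim Pi)%N by exact: leq_trans d' (eq_leq (esym dPi)).
      rewrite (geq_leqif (dimv_leqif_sup (addvSl Pi <[x]>%VS))) => /subvP H.
      by apply: H; apply: (subvP (addvSr _ _)); apply: memv_line.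
    have eI : sv (Sg :&: Pi) = sv Sg :&: peR0.
      apply/setP => x; apply/idP/idP => [xI | xH].
        rewrite in_sv in xI; case/memv_capP: xI => xS xP.
        rewrite in_setI in_sv in_set; apply/andP; split; first exact: xS.
        apply/eqP; exact: isoP _ _ R0P xP.
      move: xH; rewrite in_setI in_sv in_set => /andP [xS /eqP xR].
      rewrite in_sv; apply/memv_capP; split; [exact: xS | exact: HinP].
    have dimI : \dim (Sg :&: Pi) = g.
      apply/eqP; rewrite -(eqn_exp2l _ _ (ltnSn 1)) -card_sv eI hgS'.
      done.
    have eP2 : sv Pi :&: peX0 = sv (Sg :&: Pi).
      apply/esym/eqP; rewrite eqEcard; apply/andP; split.
        apply/subsetP => x; rewrite in_sv => /memv_capP [xS xP].
        rewrite in_setI in_sv in_set; apply/andP; split; first exact: xP.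
        apply/eqP; exact: isoS _ _ X0S xS.
      by rewrite card_sv dimI hgP.
    have ePx : forall x, x \in Pi -> (x \in Sg) = (polar A X0 x == 0).
      move=> x xP; apply/idP/idP => [xS | /eqP xX].
        by apply/eqP; exact: isoS _ _ X0S xS.
      have : x \in sv Pi :&: peX0.
        rewrite in_setI in_sv in_set; apply/andP; split; [exact: xP | exact/eqP].
      by rewrite eP2 in_sv => /memv_capP [].
    have eHx : forall x, x \in Sg -> (x \in Pi) = (polar A R0 x == 0).
      move=> x xS; apply/idP/idP => [xP | /eqP xR].
        by apply/eqP; exact: isoP _ _ R0P xP.
      exact: HinP.
    have nal : ~~ (al <= Pi)%VS.
      apply/negP => /subvP H.
      have := isoP _ _ (H a0 a0al) R0P; rewrite Ha0 => h.
      by move/eqP: F2_1neq0; apply.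
    have eCu : C = C1eq :|: C2eq :|: C3eq.
      rewrite -eC1 -eC2 -eC3 -setUA; exact: setDUK' sU.
    right; exists Sg, Pi; split.
    - by split; split.
    - exact: alS.
    - exact: nal.
    - exact: dimI.
    - by rewrite eCu; apply: final_set.
  have nT : forall x, x \in C -> x \notin typeII A al.
    move=> x xC; apply/negP => xT; move/negP: NT; apply.
    by apply/existsP; exists x; rewrite xC.
  exfalso.
  set Pi := <<enum C>>%VS.
  have QP : in_quadric A Pi.
    apply: span_quadric => [x|x y]; rewrite ?mem_enum; first exact: qC.
    move=> xC yC; apply: (pair0 Hal Hcl xC yC) => HT.
      by exfalso; move/negP: (nT x xC); apply.
    by exfalso; move/negP: (nT y yC); apply.
  have sCP : C \subset ppoints Pi.
    apply/subsetP => x xC; rewrite inE nzC //=.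
    by apply: memv_span; rewrite mem_enum.
  have [eC dP] := fill_gen Hpi QP sCP HC.
  set D := (al :&: Pi)%VS.
  set E := (al :\: Pi)%VS.
  set G := (Pi :&: perpS A E)%VS.
  have h1 := perpS_dim A E Pi.
  have h2 := dimv_cap_compl al Pi.
  have sGD : (G <= D)%VS.
    apply/subvP => x /memv_capP [xPi xperp].
    have px : perpal A al x.
      apply/perpalP => a; rewrite -(addv_diff_cap al Pi) => /memv_addP [e eE [d dD ->]].
      rewrite polarDl (perpS_mem xperp eE) add0r.
      by move/memv_capP: dD => [_ dPi]; apply: (quadric_iso QP dPi xPi).
    have [->|x0] := eqVneq x 0; first by rewrite mem0v.
    have xC : x \in C by rewrite eC inE x0 xPi.
    apply/memv_capP; split => //.
    apply/negPn/negP => xnal; move: (nT x xC); rewrite typeIIE // xnal px.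
    by rewrite (subsetP Cq x xC).
  have h3 := dimvS sGD.
  rewrite dal in h2; rewrite dP in h1.
  exact: arithB sg h1 h2 h3 erefl.
have pC : forall x, x \in C -> perpal A al x.
  move=> x xC; apply/negPn/negP => nx; move/negP: NE; apply.
  by apply/existsP; exists x; rewrite xC.
set Sg := (al + <<enum C>>)%VS.
have QS : in_quadric A Sg.
  apply: quadric_add => //.
    apply: span_quadric => [x|x y]; rewrite ?mem_enum; first exact: qC.
    move=> xC yC; apply: (pair0 Hal Hcl xC yC) => _; exact: pC.
  move=> u v ual; apply: perp_span => y; rewrite mem_enum => yC.
  by move/perpalP: (pC y yC); apply.
have sCS : C \subset ppoints Sg.
  apply/subsetP => x xC; rewrite inE nzC //=.
  by apply: (subvP (addvSr _ _)); apply: memv_span; rewrite mem_enum.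
have [eC dS] := fill_gen Hpi QS sCS HC.
left; exists Sg; split => //; exact: addvSl.
Qed.
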